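(* Let $n\ge3$ be odd, $d,R\in\mathbb{Q}$, $d\ne0$, $R$ not a square, $D=d^2-R$, let $\zeta$ be a primitive $n$th root of unity in $\mathbb{C}$ and $K=\mathbb{Q}(\sqrt R(\zeta-\zeta^{-1}))$. Let $u\in\mathbb{C}$ be any zero of $f_n=f_n(Z,d,R)$ and $L\subseteq\mathbb{C}$ the splitting field of $f_n$ over $\mathbb{Q}$. Then $L$ is the composite field $\mathbb{Q}(u)\cdot K$.
   Context: $f_n(Z,d,R)=\sum_{j=0}^{(n-1)/2}(-1)^j\frac{n}{n-j}\binom{n-j}{j}D^jZ^{n-2j}-2dD^{(n-1)/2}$, which equals $\sqrt D^{\,n}F_n(Z/\sqrt D)-2dD^{(n-1)/2}$ where $F_n(Z)=2T_n(Z/2)$ and $T_n$ is the Chebyshev polynomial of the first kind. *)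

(* Defs.v *)
(* C is modelled by algC (algebraic closure of Q inside C). *)
From mathcomp Require Import all_boot all_order all_algebra all_field.
Set Implicit Arguments. Unset Strict Implicit. Unset Printing Implicit Defensive.
Import Order.TTheory GRing.Theory Num.Theory.
Local Open Scope ring_scope.

Definition fpoly (n : nat) (d R : rat) : {poly rat} :=
  let D := d ^+ 2 - R in
  \sum_(j < (n.-1)./2.+1)
     (((-1) ^+ j * (n%:R / (n - j)%:R) * ('C(n - j, j))%:R * D ^+ j) *: 'X^(n - 2 * j))
  - (2 * d * D ^+ ((n.-1)./2))%:P.

(* A subfield of algC (as a Prop-valued set); it automatically contains Q. *)
Definition is_subfield (F : algC -> Prop) : Prop :=
  [/\ F 0, F 1,
      (forall x y, F x -> F y -> F (x - y)),
      (forall x y, F x -> F y -> F (x * y)) &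
      (forall x, F x -> F x^-1)].

Definition gen_field (S : algC -> Prop) : algC -> Prop :=
  fun x => forall F, is_subfield F -> (forall y, S y -> F y) -> F x.

Definition splitting_field_in_C (p : {poly rat}) : algC -> Prop :=
  gen_field (fun x => root (map_poly ratr p) x).

Definition compositum (F1 F2 : algC -> Prop) : algC -> Prop :=
  gen_field (fun x => F1 x \/ F2 x).

(* Main.v *)
Require Import Defs.
From mathcomp Require Import all_boot all_order all_algebra all_field.
From mathcomp Require Import zify ring.
Import Order.TTheory GRing.Theory Num.Theory.
Local Open Scope ring_scope.

Section SF.
Variable F : algC -> Prop.
Hypothesis HF : is_subfield F.
Lemma sf0 : F 0. Proof. by case: HF. Qed.
Lemma sf1 : F 1. Proof. by case: HF. Qed.
Lemma sfB x y : F x -> F y -> F (x - y). Proof. by case: HF => _ _ H _ _; apply: H. Qed.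
Lemma sfM x y : F x -> F y -> F (x * y). Proof. by case: HF => _ _ _ H _; apply: H. Qed.
Lemma sfV x : F x -> F x^-1. Proof. by case: HF => _ _ _ _ H; apply: H. Qed.
Lemma sfN x : F x -> F (- x). Proof. by move=> Hx; rewrite -sub0r; apply: sfB => //; apply: sf0. Qed.
Lemma sfD x y : F x -> F y -> F (x + y).
Proof. by move=> Hx Hy; rewrite -[y]opprK; apply: sfB => //; apply: sfN. Qed.
Lemma sfdiv x y : F x -> F y -> F (x / y).
Proof. by move=> Hx Hy; apply: sfM => //; apply: sfV. Qed.
Lemma sfX x k : F x -> F (x ^+ k).
Proof. by move=> Hx; elim: k => [|k IH]; [rewrite expr0; apply: sf1 | rewrite exprS; apply: sfM]. Qed.
Lemma sf_nat k : F k%:R.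
Proof. elim: k => [|k IH]; first exact: sf0. by rewrite mulrSr; apply: sfD => //; apply: sf1. Qed.
Lemma sf_int (z : int) : F z%:~R.
Proof. case: z => k; first exact: sf_nat. by rewrite NegzE mulrNz; apply: sfN; apply: sf_nat. Qed.
Lemma sf_rat q : F (ratr q).
Proof. by rewrite /ratr; apply: sfdiv; apply: sf_int. Qed.

Lemma sf_pow z w : F (z + w) -> F (z * w) -> forall k,
  F (z ^+ k + w ^+ k) /\ exists2 e, F e & z ^+ k - w ^+ k = (z - w) * e.
Proof.
move=> Hs Hp.
have H : forall k, (F (z ^+ k + w ^+ k) /\ exists2 e, F e & z ^+ k - w ^+ k = (z - w) * e) /\
                   (F (z ^+ k.+1 + w ^+ k.+1) /\ exists2 e, F e & z ^+ k.+1 - w ^+ k.+1 = (z - w) * e).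
  elim=> [|k [[H1 [e1 He1 E1]] [H2 [e2 He2 E2]]]].
    split; split.
    - by rewrite !expr0 -(natrD _ 1 1); apply: sf_nat.
    - by exists 0; [apply: sf0 | rewrite !expr0 subrr mulr0].
    - by rewrite !expr1.
    - by exists 1; [apply: sf1 | rewrite !expr1 mulr1].
  split; first by split=> //; exists e2.
  have E : forall y, y ^+ k.+2 = (z + w) * y ^+ k.+1 - (z * w) * y ^+ k -> True by [].
  split.
    have -> : z ^+ k.+2 + w ^+ k.+2 = (z + w) * (z ^+ k.+1 + w ^+ k.+1) - (z * w) * (z ^+ k + w ^+ k).
      rewrite !exprS; ring.
    by apply: sfB; apply: sfM.
  exists ((z + w) * e2 - (z * w) * e1).
    by apply: sfB; apply: sfM.
  have -> : z ^+ k.+2 - w ^+ k.+2 = (z + w) * (z ^+ k.+1 - w ^+ k.+1) - (z * w) * (z ^+ k - w ^+ k).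
    rewrite !exprS; ring.
  rewrite E1 E2; ring.
by move=> k; case: (H k).
Qed.
End SF.
Arguments sf0 {F} HF. Arguments sf1 {F} HF.
Arguments sfB {F} HF {x y}. Arguments sfM {F} HF {x y}. Arguments sfV {F} HF {x}.
Arguments sfN {F} HF {x}. Arguments sfD {F} HF {x y}. Arguments sfdiv {F} HF {x y}.
Arguments sfX {F} HF {x} k. Arguments sf_nat {F} HF k. Arguments sf_int {F} HF z.
Arguments sf_rat {F} HF q. Arguments sf_pow {F} HF {z w}.

Lemma gen_field_sub S : is_subfield (gen_field S).
Proof.
split.
- by move=> F HF _; apply: sf0.
- by move=> F HF _; apply: sf1.
- by move=> x y Hx Hy F HF HS; apply: sfB => //; [apply: Hx | apply: Hy].
- by move=> x y Hx Hy F HF HS; apply: sfM => //; [apply: Hx | apply: Hy].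
- by move=> x Hx F HF HS; apply: sfV => //; apply: Hx.
Qed.

Lemma gen_field_in (S : algC -> Prop) x : S x -> gen_field S x.
Proof. by move=> Hx F _ HS; apply: HS. Qed.
Section Cheb.
Variable (R : comRingType).
Definition Tc (m : nat) (S P : R) : R :=
  \sum_(j < m.+1) ('C(m - j, j))%:R * (- P) ^+ j * S ^+ (m - 2 * j).

Lemma Tc0 S P : Tc 0 S P = 1.
Proof. by rewrite /Tc big_ord1 /= bin0 mulr1 expr0 mulr1. Qed.

Lemma Tc1 S P : Tc 1 S P = S.
Proof.
rewrite /Tc big_ord_recr big_ord1 /= subnn bin0 bin0n.
by rewrite !mul0r addr0 expr0 !mul1r expr1.
Qed.

Lemma Tc_rec m S P : Tc m.+2 S P = S * Tc m.+1 S P - P * Tc m S P.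
Proof.
rewrite /Tc big_ord_recl [X in S * X]big_ord_recl /= !bin0 !expr0 !mul1r.
rewrite mulrDr -exprS !subn0 -addrA; congr (_ + _).
rewrite big_ord_recr /= /bump /= add1n subnn bin0n mul0r mul0r addr0.
rewrite !mulr_sumr -sumrB; apply: eq_bigr => [[j Hj]] _ /=.
rewrite /bump /= !add1n.
have Hc : 'C(m.+2 - j.+1, j.+1) = ('C(m - j, j.+1) + 'C(m - j, j))%N.
  rewrite subSS; have -> : (m.+1 - j = (m - j).+1)%N by lia.
  by rewrite binS.
rewrite Hc natrD !exprS.
have -> : (m.+2 - 2 * j.+1 = m - 2 * j)%N by lia.
have -> : (m.+1 - j.+1 = m - j)%N by lia.
case: (ltnP (2 * j) m) => H.
  have -> : (m.+1 - 2 * j.+1 = (m - 2 * j).-1)%N by lia.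
  have -> : S ^+ (m - 2 * j) = S * S ^+ (m - 2 * j).-1.
    by rewrite -exprS prednK //; lia.
  ring.
rewrite (@bin_small (m - j) j.+1); last by lia.
rewrite mul0r add0r; ring.
Qed.

Lemma dickson m (z w : R) :
  z ^+ m.+2 + w ^+ m.+2 = Tc m.+2 (z + w) (z * w) - (z * w) * Tc m (z + w) (z * w).
Proof.
set S := z + w; set P := z * w.
have H : forall k, z ^+ k.+2 + w ^+ k.+2 = Tc k.+2 S P - P * Tc k S P
   /\ z ^+ k.+3 + w ^+ k.+3 = Tc k.+3 S P - P * Tc k.+1 S P.
  elim=> [|k [IH1 IH2]].
    rewrite !Tc_rec Tc0 Tc1 /S /P; split; ring.
  split=> //.
  have E : z ^+ k.+4 + w ^+ k.+4 = S * (z ^+ k.+3 + w ^+ k.+3) - P * (z ^+ k.+2 + w ^+ k.+2).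
    rewrite /S /P !exprS; ring.
  rewrite E IH1 IH2 (Tc_rec k.+2) (Tc_rec k); ring.
by case: (H m).
Qed.
End Cheb.
Lemma coef_id n j : (j <= n)%N ->
  (n * 'C(n - j, j) = (n - j) * ('C(n - j, j) + (if j is i.+1 then 'C(n - j - 1, i) else 0)))%N.
Proof.
case: j => [|i] Hj; first by rewrite subn0 addn0.
have := mul_bin_diag (n - i.+1) i.
have -> : ((n - i.+1).-1 = n - i.+1 - 1)%N by lia.
move=> E; rewrite mulnDr E; set c := 'C(_, _); rewrite -mulnDl; congr (_ * _)%N; lia.
Qed.

Lemma fpoly_eval k (d R : rat) (z w : algC) :
  z * w = ratr (d ^+ 2 - R) ->
  (map_poly ratr (fpoly (2 * k).+3 d R)).[z + w] =
  z ^+ (2 * k).+3 + w ^+ (2 * k).+3 - 2 * ratr d * (ratr (d ^+ 2 - R)) ^+ k.+1.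
Proof.
move=> Hzw.
set n := (2 * k).+3; set m := (2 * k).+1.
have Hh : ((n.-1)./2 = k.+1)%N.
  by rewrite /n /= mul2n doubleK.
rewrite /fpoly Hh rmorphB rmorph_sum /= hornerD hornerN horner_sum map_polyC hornerC.
rewrite /= !rmorphM /= rmorphXn /= rmorphMn /= rmorph1 -Hzw.
congr (_ - _).
rewrite (dickson _ m z w) -/n Hzw.
set S := z + w; set P : algC := ratr (d ^+ 2 - R).
pose b j := (if j is i.+1 then 'C(n - j - 1, i) else 0)%N.
pose g (j : nat) := ('C(n - j, j) + b j)%:R * (- P) ^+ j * S ^+ (n - 2 * j).
have HB : Tc _ n S P - P * Tc _ m S P = \sum_(j < n.+1) g j.
  rewrite /g; under eq_bigr do rewrite natrD !mulrDl.
  rewrite big_split /=; congr (_ + _).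
  rewrite big_ord_recl /= mul0r mul0r add0r big_ord_recr /= /bump /=.
  rewrite [X in _ = _ + X](_ : _ = 0); last first.
    by rewrite /n bin_small ?mul0r //; lia.
  rewrite addr0 /Tc mulr_sumr -sumrN; apply: eq_bigr => [[i Hi]] _ /=.
  rewrite /bump /= add1n.
  have -> : (n - i.+1 - 1 = m - i)%N by rewrite /n /m; lia.
  have -> : (n - 2 * i.+1 = m - 2 * i)%N by rewrite /n /m; lia.
  rewrite exprS; ring.
rewrite HB.
rewrite (big_ord_widen n.+1 (fun i => (map_poly ratr
        (((-1) ^+ i * (n%:R / (n - i)%:R) * 'C(n - i, i)%:R *
          (d ^+ 2 - R) ^+ i) *: 'X^(n - 2 * i))).[S])); last by rewrite /n; lia.
rewrite big_mkcond /=; apply: eq_bigr => [[j Hj]] _ /=.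
case: ifP => Hjk.
  rewrite map_polyZ /= map_polyXn hornerZ hornerXn /g.
  rewrite !rmorphM /= !rmorphXn /= rmorphN1 fmorphV /= !ratr_nat.
  rewrite -/P [(- P) ^+ j]exprNn.
  have Hn0 : (n - j)%:R != 0 :> algC by rewrite pnatr_eq0 /n; lia.
  have Hjn : (j <= n)%N by rewrite /n; lia.
  have := coef_id n j Hjn => /(congr1 (fun x => x%:R : algC)).
  rewrite !natrM -/(b j) => E2.
  have E3 : n%:R / (n - j)%:R * ('C(n - j, j))%:R = ('C(n - j, j) + b j)%:R :> algC.
    by rewrite mulrAC E2 mulrAC divff // mul1r.
  rewrite -E3; ring.
rewrite /g (@bin_small (n - j) j); last by rewrite /n; lia.
rewrite /b; case: j Hj Hjk => [|i] Hj Hjk //= .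
rewrite bin_small ?mul0r //; rewrite /n; lia.
Qed.

Lemma decomp (v P : algC) : exists a b, a + b = v /\ a * b = P.
Proof.
set dl := sqrtC (v ^+ 2 - 4 * P).
exists ((v + dl) / 2), ((v - dl) / 2).
have H2 : (2 : algC) != 0 by rewrite pnatr_eq0.
split; first by field.
have : dl ^+ 2 = v ^+ 2 - 4 * P by rewrite sqrtCK.
move=> E; apply/eqP; rewrite -subr_eq0; apply/eqP.
have -> : (v + dl) / 2 * ((v - dl) / 2) - P = (v ^+ 2 - dl ^+ 2 - 4 * P) / 4 by field.
by rewrite E; field.
Qed.

Theorem proposition2 (n : nat) (d R : rat) (zeta u : algC) :
  (3 <= n)%N -> odd n -> d != 0 -> ~ (exists q : rat, q ^+ 2 = R) ->
  n.-primitive_root zeta ->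
  root (map_poly ratr (fpoly n d R)) u ->
  let K := gen_field (fun x => x = sqrtC (ratr R) * (zeta - zeta^-1)) in
  let Qu := gen_field (fun x => x = u) in
  forall x, splitting_field_in_C (fpoly n d R) x <-> compositum Qu K x.
Proof.
move=> Hn3 Hodd _ HnsqR Hprim Hu K Qu.
have HQu : is_subfield Qu by apply: gen_field_sub.
have HQuu : Qu u by apply: gen_field_in.
have HQmin : forall F, is_subfield F -> F u -> forall y, Qu y -> F y.
  by move=> F HF Hu' y Hy; apply: Hy => // z ->.
have HK : is_subfield K by apply: gen_field_sub.
have HKth : K (sqrtC (ratr R) * (zeta - zeta^-1)) by apply: gen_field_in.
have HKmin : forall F, is_subfield F -> F (sqrtC (ratr R) * (zeta - zeta^-1)) -> forall y, K y -> F y.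
  by move=> F HF Hu' y Hy; apply: Hy => // z ->.
clearbody K Qu.
have [k Hk] : exists k, n = (2 * k).+3.
  exists (n./2).-1; have := odd_double_half n; rewrite Hodd -mul2n; lia.
subst n.
set n := (2 * k).+3.
set P : algC := ratr (d ^+ 2 - R).
set s := sqrtC (ratr R : algC).
set x := zeta - zeta^-1.
set th := s * x.
set T0 : algC := 2 * ratr d * P ^+ k.+1.
have HR0 : R != 0.
  by apply/eqP => E; apply: HnsqR; exists 0; rewrite E expr0n.
have HP0 : P != 0.
  rewrite /P fmorph_eq0 subr_eq0; apply/eqP => E; apply: HnsqR; exists d; by rewrite E.
have Hs2 : s ^+ 2 = ratr R by rewrite sqrtCK.
have Hs0 : s != 0.
  by apply/eqP => E; move: Hs2; rewrite E expr0n /= => /esym/eqP; rewrite fmorph_eq0 (negPf HR0).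
have Hzn : zeta ^+ n = 1 by apply: prim_expr_order.
have Hz0 : zeta != 0.
  by apply/eqP => E; move: Hzn; rewrite E expr0n /= => /eqP; rewrite eq_sym oner_eq0.
have HzV : zeta * zeta^-1 = 1 by rewrite divff.
have Hroot : forall zz ww, zz * ww = P ->
    root (map_poly ratr (fpoly n d R)) (zz + ww) <-> zz ^+ n + ww ^+ n = T0.
  move=> zz ww Hp; rewrite /root fpoly_eval // -/n -/P subr_eq0; split; by move/eqP.
have [a [b [Hab Hpab]]] := decomp u P.
have HT : a ^+ n + b ^+ n = T0 by apply/Hroot; rewrite // Hab.
have Ha0 : a != 0 by apply/eqP => E; move: Hpab; rewrite E mul0r => /esym/eqP; rewrite (negPf HP0).
set t := a ^+ n - b ^+ n.
have Ht2 : t ^+ 2 = (2 * P ^+ k.+1 * s) ^+ 2.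
  have -> : t ^+ 2 = (a ^+ n + b ^+ n) ^+ 2 - 4 * (a * b) ^+ n by rewrite /t exprMn; ring.
  rewrite HT Hpab /T0 [RHS]exprMn Hs2 /n.
  have -> : (ratr R : algC) = ratr d ^+ 2 - P by rewrite /P rmorphB rmorphXn /=; ring.
  have -> : P ^+ (2 * k).+3 = (P ^+ k.+1) ^+ 2 * P.
    by rewrite -exprM -exprSr; congr (_ ^+ _); lia.
  ring.
have Ht : t = 2 * P ^+ k.+1 * s \/ t = - (2 * P ^+ k.+1 * s).
  by move/eqP: Ht2; rewrite eqf_sqr => /orP [/eqP|/eqP]; [left|right].
have Ht0 : t != 0.
  have H2 : 2 * P ^+ k.+1 * s != 0.
    by rewrite !mulf_neq0 ?expf_neq0 // pnatr_eq0.
  by case: Ht => ->; rewrite ?oppr_eq0.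
have [_ [e He Hte]] : (Qu (a ^+ n + b ^+ n) /\ exists2 e, Qu e & a ^+ n - b ^+ n = (a - b) * e).
  apply: sf_pow => //; first by rewrite Hab.
  by rewrite Hpab; apply: sf_rat => //.
have He0 : e != 0 by apply: contra Ht0 => /eqP E; rewrite /t Hte E mulr0.
have Hamb : (a - b) * x = t * x / e by rewrite /t Hte; field.
have H2P : 2 * P ^+ k.+1 != 0 by rewrite mulf_neq0 ?expf_neq0 // pnatr_eq0.
have Htx : forall F, is_subfield F -> F th -> F (t * x).
  move=> F HF Hth.
  have H0 : F (2 * P ^+ k.+1).
    apply: sfM => //; [apply: sf_nat => // | apply: sfX => //; apply: sf_rat => //].
  have H1 : F (2 * P ^+ k.+1 * th) by apply: sfM.
  have E : forall c : algC, c * s * x = c * th by move=> c; rewrite -mulrA.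
  case: Ht => ->; first by rewrite E.
  by rewrite mulNr E; apply: sfN.
have Hthx : forall F, is_subfield F -> F (t * x) -> F th.
  move=> F HF Htx'.
  have HP' : F (2 * P ^+ k.+1).
    apply: sfM => //; [apply: sf_nat => // | apply: sfX => //; apply: sf_rat => //].
  case: Ht => Et.
    have -> : th = t * x / (2 * P ^+ k.+1) by rewrite Et /th; field; rewrite expf_neq0.
    exact: sfdiv.
  have -> : th = - (t * x / (2 * P ^+ k.+1)) by rewrite Et /th; field; rewrite expf_neq0.
  by apply: sfN => //; apply: sfdiv.
have HRc0 : (ratr R : algC) != 0 by rewrite fmorph_eq0.
have Kc : K (zeta + zeta^-1).
  have Kx2 : K (x ^+ 2).
    have -> : x ^+ 2 = th ^+ 2 / ratr R by rewrite /th exprMn Hs2; field.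
    exact: (sfdiv HK (sfX HK 2 HKth) (sf_rat HK R)).
  have Kc2 : K ((zeta + zeta^-1) ^+ 2).
    have -> : (zeta + zeta^-1) ^+ 2 = x ^+ 2 + 4 * (zeta * zeta^-1) by rewrite /x; ring.
    by rewrite HzV mulr1; apply: sfD => //; apply: sf_nat => //.
  have Hs : K (zeta ^+ 2 + zeta^-1 ^+ 2).
    have -> : zeta ^+ 2 + zeta^-1 ^+ 2 = (zeta + zeta^-1) ^+ 2 - 2 * (zeta * zeta^-1) by ring.
    by rewrite HzV mulr1; apply: sfB => //; apply: sf_nat => //.
  have Hp : K (zeta ^+ 2 * zeta^-1 ^+ 2).
    by rewrite -exprMn HzV expr1n; apply: sf1 => //.
  have [H _] := sf_pow HK Hs Hp k.+2.
  have E1 : forall y : algC, y ^+ n = 1 -> (y ^+ 2) ^+ k.+2 = y.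
    move=> y Hy; rewrite -exprM (_ : (2 * k.+2 = n.+1)%N); last by rewrite /n; lia.
    by rewrite exprSr Hy mul1r.
  rewrite E1 // E1 // in H.
  by rewrite exprVn Hzn invr1.
set Fc := compositum Qu K.
have HFc : is_subfield Fc by apply: gen_field_sub.
have FcQ : forall y, Qu y -> Fc y by move=> y Hy; apply: gen_field_in; left.
have FcK : forall y, K y -> Fc y by move=> y Hy; apply: gen_field_in; right.
have HFcmin : forall F, is_subfield F -> (forall y, Qu y -> F y) ->
    (forall y, K y -> F y) -> forall y, Fc y -> F y.
  by move=> F HF H1 H2 y Hy; apply: Hy => // z [Hz|Hz]; [apply: H1 | apply: H2].
clearbody Fc.
have FcA : Fc ((a - b) * x).
  rewrite Hamb; apply: sfdiv => //; last exact: FcQ.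
  by apply: Htx => //; apply: FcK.
have Gen : forall p q, p + q = u -> Fc ((p - q) * x) -> forall i,
    Fc (p * zeta ^+ i + q * zeta^-1 ^+ i).
  move=> p q Hpq Hpqx i.
  have Hc : Fc (zeta + zeta^-1) by apply: FcK.
  have H1 : Fc (zeta * zeta^-1) by rewrite HzV; apply: sf1 => //.
  have [Hsum [g Hg Eg]] := sf_pow HFc Hc H1 i.
  have -> : p * zeta ^+ i + q * zeta^-1 ^+ i =
     ((p + q) * (zeta ^+ i + zeta^-1 ^+ i) + (p - q) * (zeta ^+ i - zeta^-1 ^+ i)) / 2.
    by field.
  rewrite Eg Hpq -/x mulrA; apply: sfdiv => //; last exact: sf_nat.
  apply: sfD => //; apply: sfM => //; exact: FcQ.
have Split : forall al be p q, p != 0 -> al ^+ n = p ^+ n -> al * be = p * q ->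
    exists i, al = p * zeta ^+ i /\ be = q * zeta^-1 ^+ i.
  move=> al be p q Hp0 Hal Hpq.
  have : (al / p) ^+ n = 1 by rewrite expr_div_n Hal divff // expf_neq0.
  move/(prim_rootP Hprim) => [i Hi]; exists (val i).
  have Hal' : al = p * zeta ^+ i by rewrite -Hi mulrC divfK.
  split=> //.
  have Hz' : zeta ^+ i * be = q.
    apply: (mulfI Hp0); by rewrite mulrA -Hal'.
  have Hzi : zeta^-1 ^+ i * zeta ^+ i = 1 by rewrite -exprMn mulVf // expr1n.
  by rewrite -Hz' mulrAC [zeta ^+ i * _]mulrC Hzi mul1r.
have Hb0 : b != 0 by apply/eqP => E; move: Hpab; rewrite E mulr0 => /esym/eqP; rewrite (negPf HP0).
split => Hx.
  apply: Hx; first exact: HFc.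
  move=> v Hv.
  have [al [be [Hv' Hp']]] := decomp v P.
  rewrite -Hv' in Hv *.
  have Hn' := (Hroot _ _ Hp').1 Hv.
  have : (al ^+ n - a ^+ n) * (al ^+ n - b ^+ n) = 0.
    have E : (al ^+ n - a ^+ n) * (al ^+ n - b ^+ n) =
      al ^+ n * al ^+ n - al ^+ n * (a ^+ n + b ^+ n) + (a * b) ^+ n by rewrite exprMn; ring.
    by rewrite E HT -Hn' Hpab -Hp' exprMn; ring.
  move/eqP; rewrite mulf_eq0 !subr_eq0 => /orP [] /eqP Hal.
    have [i [-> ->]] := Split al be a b Ha0 Hal (etrans Hp' (esym Hpab)).
    exact: Gen.
  have [i [-> ->]] := Split al be b a Hb0 Hal (etrans Hp' (esym (etrans (mulrC _ _) Hpab))).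
  apply: Gen; first by rewrite addrC.
  by rewrite -opprB mulNr; apply: sfN.
set L := splitting_field_in_C _.
have HL : is_subfield L by apply: gen_field_sub.
have HLr : forall v, root (map_poly ratr (fpoly n d R)) v -> L v.
  by move=> v Hv; apply: gen_field_in.
clearbody L.
have HLu : L u by apply: HLr.
have HLQ : forall y, Qu y -> L y by apply: HQmin.
have Hr1 : forall p q, p * q = P -> p ^+ n + q ^+ n = T0 ->
   L (p * zeta + q * zeta^-1).
  move=> p q Hpq Hpn; apply: HLr; apply/Hroot.
    by rewrite mulrACA HzV mulr1.
  by rewrite !exprMn Hzn exprVn Hzn invr1 !mulr1.
have HLab : L ((a - b) * x).
  have -> : (a - b) * x = (a * zeta + b * zeta^-1) - (b * zeta + a * zeta^-1) by rewrite /x; ring.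
  apply: sfB => //; apply: Hr1 => //; by [rewrite mulrC | rewrite addrC].
have HLth : L th.
  apply: Hthx => //.
  have -> : t * x = (a - b) * x * e by rewrite Hamb divfK.
  by apply: sfM => //; apply: HLQ.
apply: HFcmin Hx => //; apply: HKmin => //.
Qed.
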